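(* Let $n=2k$ and let $X\subset\mathbb{P}^{n-1}_\mathbb{C}$ be the smooth quadric $\sum_{j=1}^k z_{2j-1}z_{2j}=0$, with the action of $T=(S^1)^k$ (restricted from $T_\mathbb{C}=(\mathbb{C}^* )^k$) given by $t\cdot(z_1:\dots:z_n)=(t_1z_1:t_1^{-1}z_2:\dots:t_kz_{2k-1}:t_k^{-1}z_{2k})$, moment map \[\mu(z_1:\dots:z_n)=\frac{1}{\sum_{i=1}^n|z_i|^2}\sum_{j=1}^k(|z_{2j-1}|^2-|z_{2j}|^2)e_j,\] and $P=\mu(X)=\mathrm{conv}(\pm e_1,\dots,\pm e_k)$. Let $q\colon\mathbb{P}^{n-1}_\mathbb{C}\dashrightarrow\mathbb{P}^{k-2}_\mathbb{C}$ be the rational map $(z_1:\dots:z_n)\mapsto(z_3z_4:\dots:z_{n-1}z_n)$. Then for every $u$ in the interior $P^\circ$ of $P$, $q$ is defined on $\mu^{-1}(u)\cap X$ and $q|_{\mu^{-1}(u)}\colon\mu^{-1}(u)\to\mathbb{P}^{k-2}_\mathbb{C}$ is a quotient map to the $T$-orbit space of the fibre, i.e. two points of $\mu^{-1}(u)$ have the same image under $q$ if and only if they lie in the same $T$-orbit.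
   Context: $e_j$ denotes the $j$-th standard basis vector of $\mathbb{R}^k$. *)

(* Defs.v *)
From HB Require Import structures.
From mathcomp Require Import all_boot all_order all_algebra.
From mathcomp Require Import all_classical all_reals all_analysis.
From mathcomp Require Import complex.
Set Implicit Arguments. Unset Strict Implicit. Unset Printing Implicit Defensive.
Import Order.TTheory GRing.Theory Num.Theory.
Import numFieldNormedType.Exports.
Local Open Scope ring_scope.
Local Open Scope classical_set_scope.

(* Coordinates of C^(2K) are grouped in pairs: z j = (z_{2j-1}, z_{2j}),
   for j : 'I_K (0-based, j = 0 corresponds to the pair (z_1, z_2)). *)
Definition cvec (R : realType) (K : nat) := 'I_K -> (R[i] * R[i])%type.

Definition sqn (R : realType) (c : R[i]) : R := (complex.Re c) ^+ 2 + (complex.Im c) ^+ 2.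

Definition nonzero (R : realType) K (z : cvec R K) : Prop :=
  exists j, (z j).1 != 0 \/ (z j).2 != 0.

Definition inX (R : realType) K (z : cvec R K) : Prop :=
  \sum_(j < K) (z j).1 * (z j).2 = 0.

Definition normsq (R : realType) K (z : cvec R K) : R :=
  \sum_(j < K) (sqn (z j).1 + sqn (z j).2).

Definition mu (R : realType) K (z : cvec R K) : 'rV[R]_K :=
  \row_(j < K) ((sqn (z j).1 - sqn (z j).2) / normsq z).

Definition e_ {R : realType} {K} (j : 'I_K) : 'rV[R]_K := delta_mx 0 j.

Definition Pcross (R : realType) K : set 'rV[R]_K :=
  [set u | exists (a b : 'I_K -> R),
      (forall j, 0 <= a j) /\ (forall j, 0 <= b j) /\
      \sum_(j < K) (a j + b j) = 1 /\
      u = \sum_(j < K) (a j *: e_ j + b j *: (- e_ j))].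

(* the fibre mu^{-1}(u) /\ X, as a set of representing vectors *)
Definition in_fibre (R : realType) K (u : 'rV[R]_K) (z : cvec R K) : Prop :=
  nonzero z /\ inX z /\ mu z = u.

Definition torus (R : realType) K (t : 'I_K -> R[i]) : Prop :=
  forall j, sqn (t j) = 1.

Definition act (R : realType) K (t : 'I_K -> R[i]) (z : cvec R K) : cvec R K :=
  fun j => (t j * (z j).1, (t j)^-1 * (z j).2).

Definition same_orbit (R : realType) K (z w : cvec R K) : Prop :=
  exists t, torus t /\ exists lam : R[i], lam != 0 /\
    forall j, w j = ((lam * (act t z j).1), (lam * (act t z j).2)).

(* the rational map q : P^(n-1) --> P^(k-2), for k = k'.+2,
   (z_1 : ... : z_n) |-> (z_3 z_4 : ... : z_(n-1) z_n) *)
Definition q (R : realType) k' (z : cvec R k'.+2) : 'I_k'.+1 -> R[i] :=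
  fun j => (z (lift ord0 j)).1 * (z (lift ord0 j)).2.

Definition q_defined (R : realType) k' (z : cvec R k'.+2) : Prop :=
  exists j, q z j != 0.

Definition same_q_image (R : realType) k' (z w : cvec R k'.+2) : Prop :=
  exists lam : R[i], lam != 0 /\ forall j, q w j = lam * q z j.

(* Main.v *)
Require Import Defs.
From HB Require Import structures.
From mathcomp Require Import all_boot all_order all_algebra.
From mathcomp Require Import all_classical all_reals all_analysis.
From mathcomp Require Import complex.
From mathcomp Require Import ring lra.
Import Order.TTheory GRing.Theory Num.Theory.
Import numFieldNormedType.Exports.
Local Open Scope ring_scope.
Local Open Scope classical_set_scope.
Section S.
Variable R : realType.
Implicit Types x y : R[i].

Lemma sqnM x y : sqn (x * y) = sqn x * sqn y.
Proof. case: x => a b; case: y => c d. rewrite /sqn /=. ring. Qed.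

Lemma sqn_ge0 x : 0 <= sqn x.
Proof. case: x => a b; rewrite /sqn /=; nra. Qed.

Lemma sqn_eq0 x : sqn x = 0 -> x = 0.
Proof.
case: x => a b; rewrite /sqn /= => h.
have ha : a = 0 by apply/eqP; rewrite -sqrf_eq0; apply/eqP; nra.
have hb : b = 0 by apply/eqP; rewrite -sqrf_eq0; apply/eqP; nra.
by rewrite ha hb.
Qed.

Lemma sqn0 : sqn (0 : R[i]) = 0.
Proof. rewrite /sqn /=. ring. Qed.
Lemma sqn1 : sqn (1 : R[i]) = 1.
Proof. rewrite /sqn /=. ring. Qed.

Lemma sqn_gt0 x : x != 0 -> 0 < sqn x.
Proof.
move=> hx; rewrite lt_neqAle sqn_ge0 andbT; apply/eqP => h.
by move/eqP: hx; apply; apply: sqn_eq0.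
Qed.

Lemma sqnV x : sqn (x^-1) = (sqn x)^-1.
Proof.
have [->|hx] := eqVneq x 0; first by rewrite invr0 sqn0 invr0.
have h : sqn x * sqn x^-1 = 1 by rewrite -sqnM mulfV // sqn1.
have hp := sqn_gt0 _ hx.
apply: (mulfI (lt0r_neq0 hp)); rewrite h mulfV //; exact: lt0r_neq0.
Qed.

Lemma pair_match x1 x2 y1 y2 :
  sqn y1 = sqn x1 -> sqn y2 = sqn x2 -> y1 * y2 = x1 * x2 ->
  exists t, sqn t = 1 /\ y1 = t * x1 /\ y2 = t^-1 * x2.
Proof.
move=> h1 h2 h12.
have [y10|y1n] := eqVneq y1 0.
  have x10 : x1 = 0 by apply: sqn_eq0; rewrite -h1 y10 sqn0.
  have [y20|y2n] := eqVneq y2 0.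
    have x20 : x2 = 0 by apply: sqn_eq0; rewrite -h2 y20 sqn0.
    exists 1; rewrite sqn1 invr1 y10 y20 x10 x20; split => //; split; ring.
  have x2n : x2 != 0 by apply/eqP => x20; move/eqP: y2n; apply; apply: sqn_eq0; rewrite h2 x20 sqn0.
  exists (x2 / y2); split.
    by rewrite sqnM sqnV h2 mulfV //; apply: lt0r_neq0; apply: sqn_gt0.
  by rewrite y10 x10 mulr0 invf_div divfK.
have x1n : x1 != 0 by apply/eqP => x10; move/eqP: y1n; apply; apply: sqn_eq0; rewrite h1 x10 sqn0.
exists (y1 / x1); split.
  by rewrite sqnM sqnV h1 mulfV //; apply: lt0r_neq0; apply: sqn_gt0.
split; first by rewrite divfK.
rewrite invf_div mulrAC -h12 mulrAC mulfV // mul1r //.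
Qed.


Lemma sq_bound (s s' u N N' c : R) : 0 <= s -> 0 <= s' -> 0 <= c ->
  s^+2 = u^+2 * N^+2 + c -> s'^+2 = u^+2 * N'^+2 + c ->
  `|s - s'| <= `|u| * `|N - N'|.
Proof.
move=> hs hs' hc e1 e2.
have hsq : (s*s')^+2 >= (u^+2*N*N' + c)^+2.
  have : 0 <= (N-N')^+2 * c * u^+2.
    apply: mulr_ge0; [apply: mulr_ge0; [exact: sqr_ge0 | exact: hc] | exact: sqr_ge0].
  rewrite exprMn e1 e2. nra.
have hss : s*s' >= u^+2*N*N' + c.
  have hp : 0 <= s * s' by apply: mulr_ge0.
  nra.
have : (s - s')^+2 <= (u * (N - N'))^+2.
  rewrite exprMn; nra.
rewrite -normrM -[(s - s')^+2]real_normK ?num_real // -[(u * _)^+2]real_normK ?num_real //.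
have := normr_ge0 (s - s'); have := normr_ge0 (u * (N - N')).
set X := `|s - s'|; set Y := `|u * (N - N')|. nra.
Qed.
Lemma real_key K (a b a' b' u : 'I_K -> R) (N N' : R) :
  0 < N -> 0 < N' -> \sum_j `|u j| < 1 ->
  (forall j, 0 <= a j) -> (forall j, 0 <= b j) ->
  (forall j, 0 <= a' j) -> (forall j, 0 <= b' j) ->
  (forall j, a j - b j = u j * N) -> (forall j, a' j - b' j = u j * N') ->
  (forall j, a j * b j = a' j * b' j) ->
  N = \sum_j (a j + b j) -> N' = \sum_j (a' j + b' j) ->
  forall j, a j = a' j /\ b j = b' j.
Proof.
move=> N0 N'0 hu ha hb ha' hb' hd hd' hp hN hN'.
have hb1 : forall j, `|(a j + b j) - (a' j + b' j)| <= `|u j| * `|N - N'|.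
  move=> j; apply: (@sq_bound (a j + b j) (a' j + b' j) (u j) N N' (4 * (a j * b j))).
  - by have := ha j; have := hb j; lra.
  - by have := ha' j; have := hb' j; lra.
  - by have := ha j; have := hb j; nra.
  - by rewrite -exprMn -(hd j); ring.
  - by rewrite -exprMn -(hd' j) (hp j); ring.
have hNN : N = N'.
  have h1 : `|N - N'| <= (\sum_j `|u j|) * `|N - N'|.
    rewrite {1}hN {1}hN' -sumrB mulr_suml.
    apply: le_trans (ler_norm_sum _ _ _) _.
    by apply: ler_sum => j _; apply: hb1.
  have h2 := normr_ge0 (N - N').
  have h3 : `|N - N'| = 0 by nra.
  by apply/eqP; rewrite -subr_eq0 -normr_eq0; apply/eqP.
move=> j; have := hb1 j; rewrite hNN subrr normr0 mulr0 => h.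
have h0 : `|a j + b j - (a' j + b' j)| = 0 by apply/eqP; rewrite eq_le h normr_ge0.
move/eqP: h0; rewrite normr_eq0 => /eqP h0.
have := hd j; have := hd' j; rewrite hNN; lra.
Qed.

End S.
Arguments sqn_ge0 {R}. Arguments sqn_gt0 {R x}. Arguments sqn_eq0 {R x}.
Arguments sqnM {R}. Arguments sqn0 {R}. Arguments sqn1 {R}. Arguments sqnV {R}.
Arguments pair_match {R x1 x2 y1 y2}. Arguments sq_bound {R}.
Lemma Pcross_le (R : realType) K (v : 'rV[R]_K) : Pcross v -> \sum_j `|v 0 j| <= 1.
Proof.
move=> [a [b [a0 [b0 [s1 ->]]]]].
rewrite -s1; apply: ler_sum => j _.
rewrite summxE.
rewrite (bigD1 j) //= big1 => [|i /negbTE ij].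
  rewrite addr0 !mxE /= eqxx /=.
  have := a0 j; have := b0 j; set x := a j; set y := b j => hx hy.
  rewrite ler_norml; apply/andP; split; lra.
by rewrite !mxE /= eq_sym ij /=; lra.
Qed.

Lemma interior_lt (R : realType) K (u : 'rV[R]_K.+1) :
  interior (@Pcross R K.+1) u -> \sum_j `|u 0 j| < 1.
Proof.
move=> hu.
set s : R := if 0 <= u 0 ord0 then 1 else -1.
pose g := fun h : R => u + h *: (s *: e_ ord0).
have gc : g x @[x --> (0:R)] --> u.
  have -> : u = g 0 by rewrite /g scale0r addr0.
  apply: cvgD; first exact: cvg_cst.
  by apply: cvgZr_tmp; exact: cvg_id.
have : \forall x \near (0:R), Pcross (g x) by exact: gc.
move/nbhs_ballP => [e /= e0 He].
have : Pcross (g (e/2)).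
  apply: He. rewrite /ball /=. rewrite sub0r normrN. rewrite ger0_norm; lra.
move/Pcross_le.
rewrite big_ord_recl [X in _ -> X < _]big_ord_recl.
have -> : \sum_(i < K) `|g (e / 2) 0 (lift ord0 i)| = \sum_(i < K) `|u 0 (lift ord0 i)|.
  apply: eq_bigr => i _; rewrite /g !mxE /=. by rewrite mulr0 mulr0 addr0.
rewrite /g !mxE /= mulr1.
rewrite /s; case: ifP => h0.
  rewrite mulr1 !ger0_norm //; last lra. lra.
rewrite mulrN1 !ler0_norm; [lra| |]; move/negbT: h0; rewrite -ltNge => h0; lra.
Qed.

Lemma normsq_gt0 (R : realType) K (z : cvec R K) : nonzero z -> 0 < normsq z.
Proof.
move=> [j hj]; rewrite /normsq (bigD1 j) //=.
have hr : 0 <= \sum_(i < K | i != j) (sqn (z i).1 + sqn (z i).2).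
  by apply: sumr_ge0 => i _; apply: addr_ge0; apply: sqn_ge0.
have ht : 0 < sqn (z j).1 + sqn (z j).2.
  case: hj => h.
    by have := sqn_gt0 h; have := sqn_ge0 (z j).2; lra.
  by have := sqn_gt0 h; have := sqn_ge0 (z j).1; lra.
lra.
Qed.

Arguments normsq_gt0 {R K z}.

Lemma fibre_eq (R : realType) K (u : 'rV[R]_K) (z : cvec R K) : in_fibre u z ->
  0 < normsq z /\ forall j, sqn (z j).1 - sqn (z j).2 = u 0 j * normsq z.
Proof.
move=> [nz [_ hmu]]; have N0 := normsq_gt0 nz; split => // j.
have := congr1 (fun m : 'rV[R]_K => m 0 j) hmu; rewrite /mu mxE => <-.
by rewrite divfK //; apply: lt0r_neq0.
Qed.

Arguments fibre_eq {R K u z}.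

Lemma prod_eq (R : realType) k' (z w : cvec R k'.+2) (lam : R[i]) :
  inX z -> inX w -> (forall j, q w j = lam * q z j) ->
  forall j, (w j).1 * (w j).2 = lam * ((z j).1 * (z j).2).
Proof.
move=> hz hw hq j; case: (unliftP ord0 j) => [i ->|->]; first exact: hq.
move: hz hw; rewrite /inX => hz hw.
rewrite big_ord_recl in hz; rewrite big_ord_recl in hw; move: hz hw.
move/eqP; rewrite addr_eq0 => /eqP ->.
move/eqP; rewrite addr_eq0 => /eqP ->.
rewrite mulrN mulr_sumr; congr (- _); apply: eq_bigr => i _; exact: hq.
Qed.

Arguments prod_eq {R k' z w lam}.
Arguments interior_lt {R K u}.

Theorem lemma3p3 (R : realType) (k' : nat) (u : 'rV[R]_k'.+2) :
  interior (@Pcross R k'.+2) u ->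
  (forall z : cvec R k'.+2, in_fibre u z -> q_defined z) /\
  (forall z w : cvec R k'.+2, in_fibre u z -> in_fibre u w ->
     (same_q_image z w <-> same_orbit z w)).
Proof.
move=> /interior_lt hu; split.
  move=> z hz; case: (pselect (q_defined z)) => // hnd; exfalso.
  have h0 i : q z i = 0.
    by case: (eqVneq (q z i) 0) => // hi; exfalso; apply: hnd; exists i.
  have hz' := hz; case: hz' => [_ [hX _]].
  have hp : forall j, (z j).1 * (z j).2 = 0 * ((z j).1 * (z j).2).
    by apply: (prod_eq hX hX) => i; rewrite h0 mul0r.
  have [N0 hd] := fibre_eq hz.
  have hj : forall j, `|u 0 j| * normsq z = sqn (z j).1 + sqn (z j).2.
    move=> j; rewrite -[normsq z]ger0_norm ?(ltW N0) // -normrM -hd.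
    have := hp j; rewrite mul0r => /(congr1 (@sqn R)); rewrite sqnM sqn0.
    have := sqn_ge0 (z j).1; have := sqn_ge0 (z j).2.
    set A := sqn _; set B := sqn _ => hB hA /eqP; rewrite mulf_eq0 => /orP [] /eqP ->.
      by rewrite sub0r normrN ger0_norm // add0r.
    by rewrite subr0 ger0_norm // addr0.
  have hs : (\sum_j `|u 0 j|) * normsq z = normsq z.
    by rewrite mulr_suml {2}/normsq; apply: eq_bigr => j _; apply: hj.
  nra.
move=> z w hz hw; split.
  move=> [lam [lam0 hq]].
  set s := sqrtC lam.
  have s2 : s ^+ 2 = lam by apply: sqrtCK.
  have s0 : s != 0 by rewrite sqrtC_eq0.
  have hzX : inX z by case: hz => [_ []].
  have hwX : inX w by case: hw => [_ []].
  have prods j : (w j).1 * (w j).2 = (s * (z j).1) * (s * (z j).2).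
    by rewrite (prod_eq hzX hwX hq) -s2; ring.
  have [Nz hdz] := fibre_eq hz.
  have [Nw hdw] := fibre_eq hw.
  have key := @real_key R _ (fun j => sqn (w j).1) (fun j => sqn (w j).2)
     (fun j => sqn (s * (z j).1)) (fun j => sqn (s * (z j).2)) (fun j => u 0 j)
     (normsq w) (sqn s * normsq z) Nw (mulr_gt0 (sqn_gt0 s0) Nz) hu
     (fun j => sqn_ge0 _) (fun j => sqn_ge0 _) (fun j => sqn_ge0 _) (fun j => sqn_ge0 _) hdw.
  have /key {}key : forall j, sqn (s * (z j).1) - sqn (s * (z j).2) = u 0 j * (sqn s * normsq z).
    by move=> j; rewrite !sqnM -mulrBr hdz; ring.
  have /key {}key : forall j, sqn (w j).1 * sqn (w j).2 = sqn (s * (z j).1) * sqn (s * (z j).2).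
    by move=> j; rewrite -!sqnM prods.
  have /(key erefl) {}key : sqn s * normsq z = \sum_j (sqn (s * (z j).1) + sqn (s * (z j).2)).
    by rewrite /normsq mulr_sumr; apply: eq_bigr => j _; rewrite !sqnM; ring.
  have ex : forall j, exists t, sqn t = 1 /\ (w j).1 = t * (s * (z j).1) /\
      (w j).2 = t^-1 * (s * (z j).2).
    by move=> j; case: (key j) => e1 e2; apply: pair_match.
  have [t ht] := fin_all_exists ex.
  exists t; split; first by move=> j; case: (ht j).
  exists s; split => // j; case: (ht j) => _ [e1 e2].
  rewrite /act /=; rewrite [w j]surjective_pairing e1 e2; congr (_, _); ring.
move=> [t [ht [lam [lam0 hw']]]].
exists (lam ^+ 2); split; first by rewrite expf_neq0.
move=> i; rewrite /q !hw' /act /=.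
have t0 : t (lift ord0 i) != 0.
  by apply/eqP => e; have := ht (lift ord0 i); rewrite e sqn0 => /eqP; rewrite eq_sym oner_eq0.
have e := mulfV t0.
transitivity (lam ^+ 2 * (t (lift ord0 i) * (t (lift ord0 i))^-1) *
  ((z (lift ord0 i)).1 * (z (lift ord0 i)).2)); first ring.
by rewrite e mulr1.
Qed.
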